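(* Assume that for every $z\in\mathcal Z_s$ the maximum $\max_{\alpha\in\mathbb R^k,\beta\in\mathbb R^m_+}L(z,\alpha,\beta)$ is attained, and let $\mathrm{BR}(z)$ be a maximizer selected by a fixed deterministic rule (a single-valued map). Starting from any $(z_0,\alpha_0,\beta_0)$ with $z_0\in\mathcal Z_s$, consider the iteration $$(\alpha_{t+1},\beta_{t+1})=\mathrm{BR}(z_t),\qquad z_{t+1}=\mathds 1_n(\mathcal J(\alpha_t,\beta_t)).$$ Then the sequence $(z_t,\alpha_t,\beta_t)$ is eventually periodic (after finitely many iterations it enters a cycle). If the cycle has length one, i.e. the iterates are eventually constant equal to $(\bar z,\bar\alpha,\bar\beta)$, then $\bar z$ is an optimal solution of the outer minimization in $\min_{z\in\mathcal Z_s}\max_{\alpha\in\mathbb R^k,\beta\in\mathbb R^m_+}L(z,\alpha,\beta)$, and $(\bar z,\bar\alpha,\bar\beta)$ is a saddle point: $L(\bar z,\alpha,\beta)\le L(\bar z,\bar\alpha,\bar\beta)\le L(z,\bar\alpha,\bar\beta)$ for all $z\in\mathcal Z_s$, $\alpha\in\mathbb R^k$, $\beta\in\mathbb R^m_+$.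
   Context: Let $Q\in\mathbb R^{n\times n}$ be symmetric positive semidefinite with eigendecomposition $Q=\sum_{i=1}^n\lambda_i v_iv_i^\top$, $\lambda_1\ge\cdots\ge\lambda_n\ge0$, $\{v_i\}$ orthonormal. Let $c\in\mathbb R^n$, $A\in\mathbb R^{m\times n}$, $b\in\mathbb R^m$, $\eta>0$, $s\le n$ a positive integer, $k\le n$, $V=[v_1,\dots,v_k]$, $\Lambda=\mathrm{diag}(\lambda_1,\dots,\lambda_k)$. Let $\mathcal Z_s=\{z\in\{0,1\}^n:\sum_j z_j\le s\}$ and $$L(z,\alpha,\beta)=-\beta^\top b-\tfrac14\|\alpha\|_2^2-\tfrac{\eta}{4}(c+V\sqrt\Lambda\alpha+A^\top\beta)^\top\mathrm{diag}(z)(c+V\sqrt\Lambda\alpha+A^\top\beta).$$ For $(\alpha,\beta)$, let $\gamma=c+V\sqrt\Lambda\alpha+A^\top\beta$ and let $\mathcal J(\alpha,\beta)\subseteq[n]$ be the set of $s$ indices with the $s$ largest values of $|\gamma_j|$, ties broken by a fixed deterministic rule; $\mathds 1_n(\mathcal J)\in\{0,1\}^n$ is the indicator vector of $\mathcal J$. *)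

(* Defs.v *)
(* R : rcfType (real closed field, needed for Num.sqrt). *)
From HB Require Import structures.
From mathcomp Require Import all_boot all_order all_algebra.
Set Implicit Arguments. Unset Strict Implicit. Unset Printing Implicit Defensive.
Import Order.TTheory GRing.Theory Num.Theory.
Local Open Scope ring_scope.

(* z in Z_s : z in {0,1}^n (encoded as a boolean finite function) with sum z_j <= s *)
Definition Zs (n s : nat) (z : {ffun 'I_n -> bool}) : bool :=
  (\sum_(j < n) nat_of_bool (z j) <= s)%N.

Definition nonneg_vec (R : numDomainType) (m : nat) (x : 'cV[R]_m) : Prop :=
  forall i, 0 <= x i 0.

(* V = [v_1, ..., v_k] (first k eigenvectors as columns) *)
Definition Vmat (R : rcfType) (n k : nat) (hk : (k <= n)%N)
  (v : 'I_n -> 'cV[R]_n) : 'M[R]_(n, k) :=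
  \matrix_(i < n, j < k) v (widen_ord hk j) i 0.

Definition sqrtLam (R : rcfType) (n k : nat) (hk : (k <= n)%N)
  (lam : 'I_n -> R) : 'M[R]_k :=
  diag_mx (\row_(j < k) Num.sqrt (lam (widen_ord hk j))).

Definition gamma (R : rcfType) (n m k : nat) (hk : (k <= n)%N)
  (lam : 'I_n -> R) (v : 'I_n -> 'cV[R]_n) (c : 'cV[R]_n) (A : 'M[R]_(m, n))
  (alpha : 'cV[R]_k) (beta : 'cV[R]_m) : 'cV[R]_n :=
  c + Vmat hk v *m sqrtLam hk lam *m alpha + A^T *m beta.

Definition diagz (R : rcfType) (n : nat) (z : {ffun 'I_n -> bool}) : 'M[R]_n :=
  diag_mx (\row_(j < n) (nat_of_bool (z j))%:R).

Definition Lfun (R : rcfType) (n m k : nat) (hk : (k <= n)%N)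
  (lam : 'I_n -> R) (v : 'I_n -> 'cV[R]_n) (c : 'cV[R]_n) (A : 'M[R]_(m, n))
  (b : 'cV[R]_m) (eta : R)
  (z : {ffun 'I_n -> bool}) (alpha : 'cV[R]_k) (beta : 'cV[R]_m) : R :=
  let g := gamma hk lam v c A alpha beta in
  - (beta^T *m b) 0 0 - 4^-1 * (alpha^T *m alpha) 0 0
  - eta / 4 * (g^T *m diagz R z *m g) 0 0.

Definition is_top_s (R : numDomainType) (n s : nat) (g : 'cV[R]_n)
  (J : {set 'I_n}) : Prop :=
  #|J| = s /\ (forall i j, i \in J -> j \notin J -> `|g j 0| <= `|g i 0|).

Definition indic (n : nat) (J : {set 'I_n}) : {ffun 'I_n -> bool} :=
  [ffun j => j \in J].

(* Main.v *)
Require Import Defs.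
From HB Require Import structures.
From mathcomp Require Import all_boot all_order all_algebra.
Import Order.TTheory GRing.Theory Num.Theory.
Local Open Scope ring_scope.

Lemma sum_top (R : realDomainType) n (a : 'I_n -> R) (J Z : {set 'I_n}) :
  (forall i, 0 <= a i) -> (forall i j, i \in J -> j \notin J -> a j <= a i) ->
  (#|Z| <= #|J|)%N -> \sum_(j in Z) a j <= \sum_(j in J) a j.
Proof.
move=> a0 top cZ.
rewrite (big_setID J) [X in _ <= X](big_setID Z) /= setIC lerD2l.
set D1 := Z :\: J; set D2 := J :\: Z.
have cD : (#|D1| <= #|D2|)%N.
  by move: cZ; rewrite -(cardsID J Z) -(cardsID Z J) setIC leq_add2l.
have e1 : (\sum_(i in D1) a i) *+ #|D2| = \sum_(i in D1) \sum_(j in D2) a i.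
  by rewrite -sumrMnl; apply: eq_bigr => i _; rewrite sumr_const.
have e2 : (\sum_(j in D2) a j) *+ #|D1| = \sum_(i in D1) \sum_(j in D2) a j.
  by rewrite exchange_big -sumrMnl; apply: eq_bigr => i _; rewrite sumr_const.
have key : (\sum_(i in D1) a i) *+ #|D2| <= (\sum_(j in D2) a j) *+ #|D1|.
  rewrite e1 e2; apply: ler_sum => i iD1; apply: ler_sum => j jD2.
  move: iD1 jD2; rewrite !inE => /andP[niJ _] /andP[_ jJ].
  exact: top.
have s2 : 0 <= \sum_(j in D2) a j by apply: sumr_ge0.
case: (posnP #|D2|) => h.
  move: cD; rewrite h leqn0 => /eqP /cards0_eq ->.
  by rewrite big_set0.
have : (\sum_(j in D2) a j) *+ #|D1| <= (\sum_(j in D2) a j) *+ #|D2|.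
  by rewrite -(subnKC cD) mulrnDr lerDl mulrn_wge0.
move=> /(le_trans key).
rewrite lerMn2r; have -> : (#|D2| == 0%N) = false by move: h; case: #|D2|.
by [].
Qed.

Lemma ev_periodic (T : finType) (F : T -> T) (x : nat -> T) :
  (forall t, x t.+1 = F (x t)) ->
  exists i p, (0 < p)%N /\ forall t, (i <= t)%N -> x (t + p)%N = x t.
Proof.
move=> Hx.
have [i [j [lt e]]] : exists i j, (i < j)%N /\ x i = x j.
  pose f := fun i : 'I_#|T|.+1 => x i.
  have nf : ~ injective f by move=> /leq_card; rewrite card_ord ltnn.
  case: (boolP [exists i, exists j, (i != j) && (f i == f j)]).
    move=> /existsP[i /existsP[j /andP[ne /eqP e]]].
    case: (ltngtP i j) => h.
    - by exists i, j.
    - by exists j, i.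
    - by move: ne; rewrite (val_inj h) eqxx.
  move=> H; exfalso; apply: nf => i j e; apply/eqP.
  apply: contraNT H => ne; apply/existsP; exists i; apply/existsP; exists j.
  by rewrite ne e eqxx.
exists i, (j - i)%N; split; first by rewrite subn_gt0.
move=> t /subnKC <-; elim: (t - i)%N => [|d IH].
  by rewrite addn0 subnKC ?(ltnW lt).
by rewrite addnS addSn Hx IH -Hx.
Qed.

Lemma quad_form (R : rcfType) n (g : 'cV[R]_n) z :
  (g^T *m diagz R z *m g) 0 0 = \sum_(j in [set j | z j]) g j 0 ^+ 2.
Proof.
rewrite /diagz mul_mx_diag mxE [RHS]big_mkcond /=.
apply: eq_bigr => j _; rewrite !mxE inE.
by case: (z j); rewrite /= ?mulr1 ?mulr0 ?mul0r // expr2.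
Qed.

Lemma Zs_card n s (z : {ffun 'I_n -> bool}) : Zs s z = (#|[set j | z j]| <= s)%N.
Proof.
rewrite /Zs; congr (_ <= _)%N.
rewrite -sum1_card [RHS]big_mkcond /=; apply: eq_bigr => j _; rewrite inE.
by case: (z j).
Qed.

Theorem proposition3p3 (R : rcfType) (n m k s : nat)
  (Q : 'M[R]_n) (lam : 'I_n -> R) (v : 'I_n -> 'cV[R]_n)
  (c : 'cV[R]_n) (A : 'M[R]_(m, n)) (b : 'cV[R]_m) (eta : R)
  (hk : (k <= n)%N)
  (J : 'cV[R]_k -> 'cV[R]_m -> {set 'I_n})
  (BR : {ffun 'I_n -> bool} -> 'cV[R]_k * 'cV[R]_m)
  (zt : nat -> {ffun 'I_n -> bool}) (alt : nat -> 'cV[R]_k)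
  (bet : nat -> 'cV[R]_m) :
  Q^T = Q ->
  (forall x : 'cV[R]_n, 0 <= (x^T *m Q *m x) 0 0) ->
  Q = \sum_(i < n) lam i *: (v i *m (v i)^T) ->
  (forall i j : 'I_n, (i <= j)%N -> lam j <= lam i) ->
  (forall i, 0 <= lam i) ->
  (forall i j, ((v i)^T *m v j) 0 0 = (i == j)%:R) ->
  0 < eta -> (0 < s)%N -> (s <= n)%N ->
  (* J(alpha, beta): the s indices of largest |gamma_j|, fixed tie-breaking *)
  (forall alpha beta, is_top_s s (gamma hk lam v c A alpha beta) (J alpha beta)) ->
  (* BR(z): a maximizer of L(z, ., .) over R^k x R^m_+ *)
  (forall z, Zs s z ->
     nonneg_vec (BR z).2 /\
     (forall alpha beta, nonneg_vec beta ->
        Lfun hk lam v c A b eta z alpha beta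
        <= Lfun hk lam v c A b eta z (BR z).1 (BR z).2)) ->
  Zs s (zt 0%N) ->
  (forall t, (alt t.+1, bet t.+1) = BR (zt t)) ->
  (forall t, zt t.+1 = indic (J (alt t) (bet t))) ->
  (exists t0 p, (0 < p)%N /\
     forall t, (t0 <= t)%N ->
       (zt (t + p)%N, alt (t + p)%N, bet (t + p)%N) = (zt t, alt t, bet t))
  /\
  (forall zb ab bb,
     (exists t0, forall t, (t0 <= t)%N -> (zt t, alt t, bet t) = (zb, ab, bb)) ->
     [/\ Zs s zb,
         nonneg_vec bb,
         (* zb optimal for the outer problem: max L(zb,.,.) <= max L(z,.,.) *)
         (forall z, Zs s z -> forall alpha beta, nonneg_vec beta ->
            exists alpha' beta', nonneg_vec beta' /\
              Lfun hk lam v c A b eta zb alpha beta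
              <= Lfun hk lam v c A b eta z alpha' beta'),
         (forall alpha beta, nonneg_vec beta ->
            Lfun hk lam v c A b eta zb alpha beta
            <= Lfun hk lam v c A b eta zb ab bb) &
         (forall z, Zs s z ->
            Lfun hk lam v c A b eta zb ab bb
            <= Lfun hk lam v c A b eta z ab bb)]).
Proof.
move=> _ _ _ _ _ _ eta0 _ _ Htop HBR Z0 Hab Hz.
pose F := fun w : {ffun 'I_n -> bool} * {ffun 'I_n -> bool} =>
  (indic (J (BR w.2).1 (BR w.2).2), w.1).
have Hstep : forall t, (zt t.+2, zt t.+1) = F (zt t.+1, zt t).
  by move=> t; rewrite /F /= Hz -(Hab t).
have [i [p [p0 Hp]]] := @ev_periodic _ F (fun t => (zt t.+1, zt t)) Hstep.
split.
  exists i.+1, p; split => // -[|t] // /Hp /= [e1 e2].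
  have h1 := Hab (t + p)%N; have h2 := Hab t.
  rewrite e2 -h2 in h1; case: h1 => h1 h1'.
  by rewrite addSn e1 h1 h1'.
move=> zb ab bb [t0 Ht].
case: (Ht t0 (leqnn _)) => z0 a0 b0.
case: (Ht t0.+1 (leqnSn _)) => z1 a1 b1.
have BRzb : BR zb = (ab, bb) by rewrite -z0 -(Hab t0) a1 b1.
have zbJ : zb = indic (J ab bb) by rewrite -z1 Hz a0 b0.
have [cJ topJ] := Htop ab bb.
have setzb : [set j | zb j] = J ab bb.
  by apply/setP => j; rewrite inE zbJ ffunE.
have Zzb : Zs s zb by rewrite Zs_card setzb cJ.
move: (HBR zb Zzb); rewrite BRzb => -[bbnn Hmax].
have right : forall z, Zs s z ->
    Lfun hk lam v c A b eta zb ab bb <= Lfun hk lam v c A b eta z ab bb.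
  move=> z; rewrite Zs_card => cz.
  rewrite /Lfun; cbv zeta; rewrite !quad_form lerD2l lerN2.
  have e4 : 0 <= eta / 4 by rewrite divr_ge0 ?ler0n // ltW.
  apply: (ler_wpM2l e4).
  rewrite setzb.
  set g := gamma _ _ _ _ _ _ _.
  apply: (@sum_top _ _ (fun j => g j 0 ^+ 2)).
  - by move=> j; apply: sqr_ge0.
  - move=> i0 j0 hi hj; have hh := topJ _ _ hi hj.
    rewrite -(real_normK (num_real (g i0 0))) -(real_normK (num_real (g j0 0))).
    rewrite !expr2; apply: ler_pM => //; exact: normr_ge0.
  - by rewrite cJ.
split => //.
move=> z Hz' alpha beta nb; exists ab, bb; split => //.
exact: le_trans (Hmax _ _ nb) (right z Hz').
Qed.
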